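(* Let $\pi(m)=(1/2)^m$ for $m\in\mathbb{N}^+$ (and $0$ otherwise), and let the proposal be $q(m,\{m+1\})=\theta=1-q(m,\{m-1\})$ for $m\in\mathbb{Z}$, $\theta\in(0,1)$. For $m,N\in\mathbb{N}^+$ let the weights be $$W_{m,N}=\frac{b_m-\varepsilon_m}{N}\,\mathrm{Bin}(N,s_m)+\varepsilon_m,$$ with $b_m=m$, $\varepsilon_m=m^{-(3-(m\bmod 3))}$, $\mathrm{Bin}(N,s)$ a binomial random variable with parameters $N$ and $s$, and $s_m\in[0,1]$ chosen so that $\mathbb{E}[W_{m,N}]=1$ (i.e. $s_m=\frac{1-\varepsilon_m}{b_m-\varepsilon_m}$ whenever $b_m\neq\varepsilon_m$). Then for every $N\in\mathbb{N}^+$ the chain generated by the noisy kernel $\tilde P_N$ is transient.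
   Context: Noisy Metropolis–Hastings kernel $\tilde P_N$: from state $m$, propose $Y\sim q(m,\cdot)$, draw independent weights $W\sim Q_{m,N}$, $U\sim Q_{Y,N}$ (the laws of $W_{m,N}$, $W_{Y,N}$), and move to $Y$ with probability $\min\{1,\frac{\pi(Y)q(Y,m)}{\pi(m)q(m,Y)}\cdot\frac{U}{W}\}$, otherwise stay at $m$ (proposals outside $\mathbb{N}^+$ are rejected). *)

(* Defs.v *)
From Stdlib Require Import Reals Lra Lia ZArith.
From Coquelicot Require Import Coquelicot.
Open Scope R_scope.

Definition pi_t (m : Z) : R := if (0 <? m)%Z then (1/2) ^ Z.to_nat m else 0.

Definition q_prop (theta : R) (m y : Z) : R :=
  if Z.eqb y (m + 1) then theta else if Z.eqb y (m - 1) then 1 - theta else 0.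

Definition b_w (m : nat) : R := INR m.
Definition eps_w (m : nat) : R := / (INR m ^ (3 - m mod 3)).

Definition binpmf (N : nat) (p : R) (k : nat) : R :=
  Binomial.C N k * p ^ k * (1 - p) ^ (N - k).

(** Value of W_{m,N} when Bin(N, s_m) = k. *)
Definition wval (N m k : nat) : R := (b_w m - eps_w m) / INR N * INR k + eps_w m.

Definition EW (N m : nat) (sm : R) : R :=
  sum_f_R0 (fun k => binpmf N sm k * wval N m k) N.

(** Acceptance probability of the noisy MH move m -> y:
    E[ min{1, pi(y)q(y,m)/(pi(m)q(m,y)) * U/W} ], W ~ Q_{m,N}, U ~ Q_{y,N}
    independent. *)
Definition accept (theta : R) (s : nat -> R) (N m y : nat) : R :=
  let zm := Z.of_nat m in let zy := Z.of_nat y in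
  sum_f_R0 (fun j => sum_f_R0 (fun k =>
     binpmf N (s m) j * binpmf N (s y) k *
     Rmin 1 ((pi_t zy * q_prop theta zy zm) / (pi_t zm * q_prop theta zm zy)
             * (wval N y k / wval N m j))) N) N.

(** Noisy MH kernel tilde P_N on the state space N^+ (encoded in nat; the
    unused state 0 is made absorbing and is never reached from N^+).
    Proposals outside N^+ (i.e. to 0) are rejected. *)
Definition PN (theta : R) (s : nat -> R) (N : nat) (m y : nat) : R :=
  match m with
  | O => if Nat.eqb y 0 then 1 else 0
  | S _ =>
    let up := q_prop theta (Z.of_nat m) (Z.of_nat (m + 1)) * accept theta s N m (m + 1) in
    let down := if (2 <=? m)%nat
                then q_prop theta (Z.of_nat m) (Z.of_nat (m - 1)) * accept theta s N m (m - 1)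
                else 0 in
    if Nat.eqb y (m + 1) then up
    else if Nat.eqb y m then 1 - up - down
    else if andb (2 <=? m)%nat (Nat.eqb y (m - 1)) then down
    else 0
  end.

Fixpoint nstep (P : nat -> nat -> R) (n : nat) (x z : nat) : R :=
  match n with
  | O => if Nat.eqb x z then 1 else 0
  | S n' => Series (fun y => nstep P n' x y * P y z)
  end.

Definition transient_chain (P : nat -> nat -> R) : Prop :=
  forall m : nat, (1 <= m)%nat -> ex_series (fun n => nstep P n m m).

(* Main.v *)
Require Import Defs.
From Stdlib Require Import Reals ZArith Lra Lia.
From Coquelicot Require Import Coquelicot.
Open Scope R_scope.
Lemma ex_series_bounded (a : nat -> R) (M : R) :
  (forall n, 0 <= a n) -> (forall n, sum_f_R0 a n <= M) -> ex_series a.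
Proof.
  intros Ha HM.
  assert (H : ex_finite_lim_seq (sum_n a)).
  { apply ex_finite_lim_seq_incr with M.
    - intro n. rewrite !sum_n_Reals. simpl. specialize (Ha (S n)). lra.
    - intro n. rewrite sum_n_Reals. apply HM. }
  destruct H as [l Hl]. exists l. exact Hl.
Qed.
Lemma Series_finite (a : nat -> R) (K : nat) :
  (forall k, (K < k)%nat -> a k = 0) -> Series a = sum_f_R0 a K.
Proof.
  intros H. unfold Series.
  rewrite (Lim_seq_ext_loc _ (fun _ => sum_f_R0 a K)).
  - rewrite Lim_seq_const. reflexivity.
  - exists K. intros n Hn. rewrite sum_n_Reals.
    induction Hn. reflexivity. simpl. rewrite IHHn, H. ring. lia.
Qed.
Lemma sum_single (f : nat -> R) K m : (m <= K)%nat -> (forall k, 0 <= f k) ->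
  f m <= sum_f_R0 f K.
Proof.
  intros Hm Hf. induction Hm.
  - destruct m. simpl; lra. simpl. pose proof (cond_pos_sum f m (fun k => Hf k)). lra.
  - simpl. specialize (Hf (S m0)). lra.
Qed.
Lemma sum_extend (f : nat -> R) a b : (a <= b)%nat -> (forall k, (a < k)%nat -> f k = 0) ->
  sum_f_R0 f b = sum_f_R0 f a.
Proof.
  intros Hab Hf. induction Hab. reflexivity. simpl. rewrite IHHab, Hf. ring. lia.
Qed.
Lemma sum_swap (a : nat -> nat -> R) K L :
  sum_f_R0 (fun i => sum_f_R0 (fun j => a i j) L) K =
  sum_f_R0 (fun j => sum_f_R0 (fun i => a i j) K) L.
Proof.
  induction K.
  - simpl. reflexivity.
  - simpl. rewrite IHK. rewrite <- sum_plus. reflexivity.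
Qed.
Lemma sum_ind (g : nat -> R) m K :
  sum_f_R0 (fun y => if Nat.eqb m y then g y else 0) K = if Nat.leb m K then g m else 0.
Proof.
  induction K.
  - simpl. destruct m; simpl; ring.
  - rewrite tech5, IHK. cbv beta. destruct (Nat.eqb m (S K)) eqn:E.
    + apply Nat.eqb_eq in E. subst. replace (Nat.leb (S K) K) with false.
      replace (Nat.leb (S K) (S K)) with true. ring.
      symmetry; apply Nat.leb_le; lia. symmetry; apply Nat.leb_gt; lia.
    + apply Nat.eqb_neq in E. destruct (Nat.leb m K) eqn:E2.
      * apply Nat.leb_le in E2. replace (Nat.leb m (S K)) with true. ring.
        symmetry; apply Nat.leb_le; lia.
      * apply Nat.leb_gt in E2. replace (Nat.leb m (S K)) with false. ring.
        symmetry; apply Nat.leb_gt; lia.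
Qed.


Lemma green_bound (P : nat -> nat -> R) (V : nat -> R) (m : nat) (c : R) :
  (forall y z, 0 <= P y z) ->
  (forall y z, (y + 1 < z)%nat -> P y z = 0) ->
  (forall y z, (z + 1 < y)%nat -> P y z = 0) ->
  (forall y, 0 <= V y) -> 0 < c ->
  (forall y, 0 <= V y - sum_f_R0 (fun z => P y z * V z) (S y)) ->
  c <= V m - sum_f_R0 (fun z => P m z * V z) (S m) ->
  ex_series (fun n => nstep P n m m).
Proof.
  intros HP Hup Hdn HV Hc Hsup Hm.
  assert (Hsupp : forall n z, (m + n < z)%nat -> nstep P n m z = 0).
  { induction n; intros z Hz.
    - simpl. replace (Nat.eqb m z) with false. reflexivity. symmetry; apply Nat.eqb_neq; lia.
    - simpl. rewrite (Series_finite _ 0).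
      + simpl. rewrite Hup by lia. ring.
      + intros k Hk. destruct (Compare_dec.le_lt_dec k (m + n)).
        * rewrite Hup by lia. ring.
        * rewrite IHn by lia. ring. }
  assert (Hfin : forall n z K, (m + n <= K)%nat ->
     nstep P (S n) m z = sum_f_R0 (fun y => nstep P n m y * P y z) K).
  { intros n z K HK. simpl. apply Series_finite. intros k Hk. rewrite Hsupp by lia. ring. }
  assert (Hpos : forall n z, 0 <= nstep P n m z).
  { induction n; intro z.
    - simpl. destruct (Nat.eqb m z); lra.
    - rewrite (Hfin n z (m + n)%nat) by lia. apply cond_pos_sum. intro y.
      apply Rmult_le_pos; auto. }
  set (PV := fun y => sum_f_R0 (fun z => P y z * V z) (S y)).
  apply ex_series_bounded with (V m / c).
  { intro n; apply Hpos. }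
  intro T.
  set (K := (m + T + 1)%nat).
  set (Sm := fun n => sum_f_R0 (fun y => nstep P n m y * V y) K).
  assert (Hstep : forall n, (n <= T)%nat ->
     Sm n - Sm (S n) = sum_f_R0 (fun y => nstep P n m y * (V y - PV y)) K).
  { intros n Hn. unfold Sm.
    transitivity (sum_f_R0 (fun y => nstep P n m y * V y) K -
                  sum_f_R0 (fun y => nstep P n m y * PV y) K).
    - f_equal.
      transitivity (sum_f_R0 (fun z => sum_f_R0 (fun y => nstep P n m y * P y z * V z) K) K).
      + apply sum_eq. intros z _. rewrite (Hfin n z K) by lia.
        rewrite Rmult_comm, scal_sum. apply sum_eq. intros; ring.
      + rewrite <- sum_swap. apply sum_eq. intros y Hy.
        destruct (Compare_dec.le_lt_dec y (m + n)).
        * unfold PV. rewrite (sum_extend _ (S y) K) by (try lia; intros k Hk; rewrite Hup by lia; ring).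
          rewrite scal_sum. apply sum_eq. intros; ring.
        * rewrite Hsupp by lia. rewrite Rmult_0_l. apply sum_eq_R0. intros; ring.
    - rewrite <- minus_sum. apply sum_eq. intros; ring. }
  assert (Hdec : forall n, (n <= T)%nat -> c * nstep P n m m <= Sm n - Sm (S n)).
  { intros n Hn. rewrite Hstep by auto.
    apply Rle_trans with (nstep P n m m * (V m - PV m)).
    - rewrite Rmult_comm. apply Rmult_le_compat_l. apply Hpos. exact Hm.
    - apply (sum_single (fun y => nstep P n m y * (V y - PV y))). unfold K; lia.
      intro k. apply Rmult_le_pos. apply Hpos. apply Hsup. }
  assert (Htel : forall n, (n <= T)%nat -> c * sum_f_R0 (fun i => nstep P i m m) n <= Sm 0%nat - Sm (S n)).
  { induction n; intro Hn.
    - apply (Hdec 0%nat). lia.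
    - rewrite tech5, Rmult_plus_distr_l. specialize (IHn ltac:(lia)). specialize (Hdec (S n) Hn). lra. }
  assert (HS0 : Sm 0%nat = if Nat.leb m K then V m else 0).
  { rewrite <- (sum_ind V m K). unfold Sm.
    apply sum_eq. intros i _. simpl. destruct (Nat.eqb m i); ring. }
  assert (HS0' : Sm 0%nat = V m).
  { rewrite HS0. replace (Nat.leb m K) with true. reflexivity. symmetry; apply Nat.leb_le; unfold K; lia. }
  assert (HSp : 0 <= Sm (S T)).
  { apply cond_pos_sum. intro y. apply Rmult_le_pos; auto. }
  specialize (Htel T (le_n _)).
  apply Rmult_le_reg_l with c. exact Hc.
  unfold Rdiv. rewrite <- Rmult_assoc, (Rmult_comm c (V m)), Rmult_assoc, Rinv_r, Rmult_1_r by lra.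
  lra.
Qed.

Lemma C_nonneg n k : 0 <= Binomial.C n k.
Proof.
  unfold Binomial.C. apply Rmult_le_pos. apply pos_INR.
  left. apply Rinv_0_lt_compat. apply Rmult_lt_0_compat; apply lt_0_INR, Factorial.lt_O_fact.
Qed.

Lemma binpmf_nonneg N p k : 0 <= p <= 1 -> 0 <= binpmf N p k.
Proof.
  intros Hp. unfold binpmf. apply Rmult_le_pos; [apply Rmult_le_pos|].
  apply C_nonneg. apply pow_le; lra. apply pow_le; lra.
Qed.

Lemma binpmf_sum N p : sum_f_R0 (binpmf N p) N = 1.
Proof.
  unfold binpmf. rewrite <- binomial. replace (p + (1 - p)) with 1 by ring. apply pow1.
Qed.

Definition ind0 (j : nat) : R := if Nat.eqb j 0 then 1 else 0.

Lemma sum_ind0 (u : nat -> R) N : sum_f_R0 (fun j => u j * ind0 j) N = u 0%nat.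
Proof.
  induction N. simpl. unfold ind0. simpl. ring.
  rewrite tech5, IHN. unfold ind0. simpl. ring.
Qed.

Lemma sum_le_w (u f g : nat -> R) N : (forall j, (j <= N)%nat -> 0 <= u j) ->
  (forall j, (j <= N)%nat -> f j <= g j) ->
  sum_f_R0 (fun j => u j * f j) N <= sum_f_R0 (fun j => u j * g j) N.
Proof.
  intros Hu Hfg. apply sum_Rle. intros j Hj. apply Rmult_le_compat_l; auto.
Qed.

Definition E2 (u v : nat -> R) N (f : nat -> nat -> R) :=
  sum_f_R0 (fun j => sum_f_R0 (fun k => u j * v k * f j k) N) N.

Lemma E2_le u v N f g : (forall j, (j <= N)%nat -> 0 <= u j) ->
  (forall j, (j <= N)%nat -> 0 <= v j) ->
  (forall j k, (j <= N)%nat -> (k <= N)%nat -> f j k <= g j k) ->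
  E2 u v N f <= E2 u v N g.
Proof.
  intros Hu Hv H. unfold E2. apply sum_Rle. intros j Hj. apply sum_Rle. intros k Hk.
  apply Rmult_le_compat_l. apply Rmult_le_pos; auto. auto.
Qed.

Lemma E2_prod u v N (phi psi : nat -> R) :
  E2 u v N (fun j k => phi j * psi k) =
  sum_f_R0 (fun j => u j * phi j) N * sum_f_R0 (fun k => v k * psi k) N.
Proof.
  unfold E2.
  transitivity (sum_f_R0 (fun j => (u j * phi j) * sum_f_R0 (fun k => v k * psi k) N) N).
  - apply sum_eq; intros j _. rewrite scal_sum. apply sum_eq; intros; ring.
  - rewrite (Rmult_comm (sum_f_R0 (fun j => u j * phi j) N)), scal_sum.
    apply sum_eq; intros; ring.
Qed.

Lemma E2_minus u v N f g : E2 u v N (fun j k => f j k - g j k) = E2 u v N f - E2 u v N g.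
Proof.
  unfold E2. rewrite <- minus_sum. apply sum_eq. intros j _.
  rewrite <- minus_sum. apply sum_eq. intros; ring.
Qed.

Lemma E2_ext u v N f g : (forall j k, f j k = g j k) -> E2 u v N f = E2 u v N g.
Proof. intros H. unfold E2. apply sum_eq; intros; apply sum_eq; intros; rewrite H; ring. Qed.

Lemma sum_affine_ind (u : nat -> R) N a b :
  sum_f_R0 (fun k => u k * (a + b * ind0 k)) N = a * sum_f_R0 u N + b * u 0%nat.
Proof.
  rewrite <- (sum_ind0 u N).
  rewrite !scal_sum, <- sum_plus. apply sum_eq. intros; ring.
Qed.

Lemma sum_const1 (u : nat -> R) N : sum_f_R0 (fun k => u k * 1) N = sum_f_R0 u N.
Proof. apply sum_eq; intros; ring. Qed.


Definition Fm (Rt : R) (wx wy : nat -> R) := fun j k => Rmin 1 (Rt * (wy k / wx j)).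

Lemma Fm_nonneg Rt wx wy j k : 0 < Rt -> 0 < wx j -> 0 < wy k -> 0 <= Fm Rt wx wy j k.
Proof.
  intros. unfold Fm. apply Rmin_glb. lra. left. apply Rmult_lt_0_compat; auto.
  apply Rdiv_lt_0_compat; auto.
Qed.

Lemma E2_A1 u v N wx wy Rt :
  (forall j, (j <= N)%nat -> 0 <= u j) -> (forall j, (j <= N)%nat -> 0 <= v j) ->
  sum_f_R0 u N = 1 -> sum_f_R0 v N = 1 ->
  E2 u v N (Fm Rt wx wy) <= 1.
Proof.
  intros Hu Hv Su Sv.
  apply Rle_trans with (E2 u v N (fun j k => 1 * 1)).
  - apply E2_le; auto. intros. unfold Fm. rewrite Rmult_1_l. apply Rmin_l.
  - rewrite E2_prod, !sum_const1, Su, Sv. lra.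
Qed.

Lemma E2_A0 u v N wx wy Rt :
  (forall j, (j <= N)%nat -> 0 <= u j) -> (forall j, (j <= N)%nat -> 0 <= v j) ->
  0 < Rt -> (forall j, (j <= N)%nat -> 0 < wx j) -> (forall j, (j <= N)%nat -> 0 < wy j) ->
  0 <= E2 u v N (Fm Rt wx wy).
Proof.
  intros Hu Hv HR Hx Hy.
  apply Rle_trans with (E2 u v N (fun j k => 0 * 0)).
  - rewrite E2_prod. rewrite (sum_eq _ (fun _ => 0)), sum_cte by (intros; ring). lra.
  - apply E2_le; auto. intros. rewrite Rmult_0_l. apply Fm_nonneg; auto.
Qed.

Lemma E2_AU u v N wx wy Rt ex ey :
  (forall j, (j <= N)%nat -> 0 <= u j) -> (forall j, (j <= N)%nat -> 0 <= v j) ->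
  sum_f_R0 u N = 1 -> sum_f_R0 v N = 1 -> 0 < Rt -> 0 < ex -> 0 < ey ->
  wx 0%nat = ex -> wy 0%nat = ey ->
  E2 u v N (Fm Rt wx wy) <= (1 + Rt * ey / ex) - u 0%nat * v 0%nat.
Proof.
  intros Hu Hv Su Sv HR Hex Hey Hx0 Hy0.
  assert (Ht : 0 <= Rt * ey / ex) by (apply Rlt_le, Rdiv_lt_0_compat; [apply Rmult_lt_0_compat|]; auto).
  apply Rle_trans with (E2 u v N (fun j k => (1 + Rt * ey / ex) * 1 - ind0 j * ind0 k)).
  - apply E2_le; auto. intros j k _ _. unfold Fm, ind0.
    destruct (Nat.eqb j 0) eqn:Ej; destruct (Nat.eqb k 0) eqn:Ek.
    + apply Nat.eqb_eq in Ej; apply Nat.eqb_eq in Ek; subst j k.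
      rewrite Hx0, Hy0. apply Rle_trans with (Rt * (ey / ex)). apply Rmin_r. unfold Rdiv; lra.
    + pose proof (Rmin_l 1 (Rt * (wy k / wx j))). lra.
    + pose proof (Rmin_l 1 (Rt * (wy k / wx j))). lra.
    + pose proof (Rmin_l 1 (Rt * (wy k / wx j))). lra.
  - rewrite E2_minus, !E2_prod, !sum_ind0.
    rewrite <- scal_sum. rewrite (sum_const1 v), Su, Sv. lra.
Qed.

Lemma E2_AL0 u v N wx wy Rt ey X :
  (forall j, (j <= N)%nat -> 0 <= u j) -> (forall j, (j <= N)%nat -> 0 <= v j) ->
  sum_f_R0 u N = 1 -> sum_f_R0 v N = 1 -> 0 < Rt -> 0 < ey ->
  (forall j, (j <= N)%nat -> 0 < wx j <= X) -> (forall k, (k <= N)%nat -> ey <= wy k) ->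
  Rmin 1 (Rt * ey / X) <= E2 u v N (Fm Rt wx wy).
Proof.
  intros Hu Hv Su Sv HR Hey Hx Hy.
  apply Rle_trans with (E2 u v N (fun j k => Rmin 1 (Rt * ey / X) * 1)).
  - rewrite E2_prod. cbv beta. rewrite sum_const1, Sv, <- scal_sum, Su. lra.
  - apply E2_le; auto. intros j k Hj Hk. rewrite Rmult_1_r. unfold Fm.
    apply Rle_min_compat_l. specialize (Hx j Hj). specialize (Hy k Hk).
    unfold Rdiv. rewrite Rmult_assoc. apply Rmult_le_compat_l. lra.
    apply Rmult_le_compat. lra. left; apply Rinv_0_lt_compat; lra. lra.
    apply Rinv_le_contravar; lra.
Qed.

Lemma E2_AL1 u v N wx wy Rt ex ey :
  (forall j, (j <= N)%nat -> 0 <= u j) -> (forall j, (j <= N)%nat -> 0 <= v j) ->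
  sum_f_R0 v N = 1 -> 0 < Rt -> 0 < ex -> 0 < ey ->
  (forall j, (j <= N)%nat -> 0 < wx j) ->
  wx 0%nat = ex -> (forall k, (k <= N)%nat -> ey <= wy k) ->
  u 0%nat * Rmin 1 (Rt * ey / ex) <= E2 u v N (Fm Rt wx wy).
Proof.
  intros Hu Hv Sv HR Hex Hey Hx Hx0 Hy.
  apply Rle_trans with (E2 u v N (fun j k => ind0 j * (Rmin 1 (Rt * ey / ex) * 1))).
  - rewrite E2_prod. cbv beta. rewrite sum_ind0, <- scal_sum, Sv. lra.
  - apply E2_le; auto. intros j k Hj Hk. unfold ind0.
    destruct (Nat.eqb j 0) eqn:Ej.
    + apply Nat.eqb_eq in Ej; subst j. rewrite Rmult_1_l, Rmult_1_r. unfold Fm.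
      apply Rle_min_compat_l. rewrite Hx0. specialize (Hy k Hk).
      unfold Rdiv. rewrite Rmult_assoc. apply Rmult_le_compat_l. lra.
      apply Rmult_le_compat_r. left; apply Rinv_0_lt_compat; lra. lra.
    + rewrite Rmult_0_l. apply Fm_nonneg; auto. specialize (Hy k Hk). lra.
Qed.

Lemma E2_AL2 u v N wx wy Rt ex ey L :
  (forall j, (j <= N)%nat -> 0 <= u j) -> (forall j, (j <= N)%nat -> 0 <= v j) ->
  sum_f_R0 v N = 1 -> 0 < Rt -> 0 < ex -> 0 < ey -> 0 <= L ->
  (forall j, (j <= N)%nat -> 0 < wx j) ->
  wx 0%nat = ex -> (forall k, (k <= N)%nat -> ey <= wy k) ->
  (forall k, (1 <= k <= N)%nat -> L <= wy k) ->
  u 0%nat * ((1 - v 0%nat) * Rmin 1 (Rt * L / ex)) <= E2 u v N (Fm Rt wx wy).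
Proof.
  intros Hu Hv Sv HR Hex Hey HL Hx Hx0 Hy HyL.
  apply Rle_trans with (E2 u v N (fun j k => ind0 j * (Rmin 1 (Rt * L / ex) + (- Rmin 1 (Rt * L / ex)) * ind0 k))).
  - rewrite E2_prod. cbv beta. rewrite sum_ind0, sum_affine_ind, Sv. lra.
  - apply E2_le; auto. intros j k Hj Hk. unfold ind0.
    destruct (Nat.eqb j 0) eqn:Ej.
    + apply Nat.eqb_eq in Ej; subst j. rewrite Rmult_1_l.
      destruct (Nat.eqb k 0) eqn:Ek.
      * replace (Rmin 1 (Rt * L / ex) + - Rmin 1 (Rt * L / ex) * 1) with 0 by ring.
        apply Fm_nonneg; auto. specialize (Hy k Hk). lra.
      * apply Nat.eqb_neq in Ek. rewrite Rmult_0_r, Rplus_0_r. unfold Fm.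
        apply Rle_min_compat_l. rewrite Hx0. specialize (HyL k ltac:(lia)).
        unfold Rdiv. rewrite Rmult_assoc. apply Rmult_le_compat_l. lra.
        apply Rmult_le_compat_r. left; apply Rinv_0_lt_compat; lra. lra.
    + rewrite Rmult_0_l. apply Fm_nonneg; auto. specialize (Hy k Hk). lra.
Qed.

Lemma INR_ge1 x : (1 <= x)%nat -> 1 <= INR x.
Proof. intros. apply (le_INR 1). auto. Qed.

Lemma eps_pos x : (1 <= x)%nat -> 0 < eps_w x <= 1.
Proof.
  intros Hx. unfold eps_w. pose proof (INR_ge1 x Hx).
  assert (H1 : 1 <= INR x ^ (3 - x mod 3)) by (apply pow_R1_Rle; lra).
  split. apply Rinv_0_lt_compat; lra.
  rewrite <- Rinv_1. apply Rinv_le_contravar; lra.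
Qed.

Lemma wv0 N x : wval N x 0 = eps_w x.
Proof. unfold wval. simpl. ring. Qed.

Lemma wv_bounds N x k : (1 <= N)%nat -> (1 <= x)%nat -> (k <= N)%nat ->
  eps_w x <= wval N x k <= INR x /\ ((1 <= k)%nat -> (INR x - 1) / INR N <= wval N x k).
Proof.
  intros HN Hx Hk. pose proof (eps_pos x Hx). pose proof (INR_ge1 x Hx).
  pose proof (INR_ge1 N HN). apply le_INR in Hk. pose proof (pos_INR k).
  unfold wval, b_w. set (e := eps_w x) in *. set (n := INR N) in *. set (kk := INR k) in *.
  assert (Hn : n * / n = 1) by (apply Rinv_r; lra).
  assert (Hn' : 0 < / n) by (apply Rinv_0_lt_compat; lra).
  unfold Rdiv. split; [split|].
  - assert (0 <= (INR x - e) * / n * kk) by (repeat apply Rmult_le_pos; lra). lra.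
  - assert ((INR x - e) * / n * kk <= (INR x - e)).
    { replace (INR x - e) with ((INR x - e) * / n * n) at 2 by (rewrite Rmult_assoc, Rinv_l; lra).
      apply Rmult_le_compat_l. apply Rmult_le_pos; lra. lra. }
    lra.
  - intros Hk1. apply le_INR in Hk1. simpl in Hk1. fold kk in Hk1.
    assert ((INR x - 1) * / n <= (INR x - e) * / n) by (apply Rmult_le_compat_r; lra).
    assert ((INR x - e) * / n <= (INR x - e) * / n * kk).
    { rewrite <- (Rmult_1_r ((INR x - e) * / n)) at 1. apply Rmult_le_compat_l.
      apply Rmult_le_pos; lra. lra. }
    lra.
Qed.

Definition Rr (theta : R) (x y : nat) : R :=
  (pi_t (Z.of_nat y) * q_prop theta (Z.of_nat y) (Z.of_nat x)) /
  (pi_t (Z.of_nat x) * q_prop theta (Z.of_nat x) (Z.of_nat y)).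

Lemma accept_E2 theta s N x y :
  accept theta s N x y = E2 (binpmf N (s x)) (binpmf N (s y)) N (Fm (Rr theta x y) (wval N x) (wval N y)).
Proof. reflexivity. Qed.

Lemma pi_t_nat x : (1 <= x)%nat -> pi_t (Z.of_nat x) = (1/2) ^ x.
Proof.
  intros Hx. unfold pi_t. replace (0 <? Z.of_nat x)%Z with true.
  rewrite Nat2Z.id. reflexivity. symmetry. apply Z.ltb_lt. lia.
Qed.

Lemma q_up theta x : q_prop theta (Z.of_nat x) (Z.of_nat (x + 1)) = theta.
Proof. unfold q_prop. replace (Z.of_nat (x+1) =? Z.of_nat x + 1)%Z with true. reflexivity.
  symmetry; apply Z.eqb_eq; lia. Qed.
Lemma q_up' theta x : q_prop theta (Z.of_nat (x + 1)) (Z.of_nat x) = 1 - theta.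
Proof. unfold q_prop. replace (Z.of_nat x =? Z.of_nat (x+1) + 1)%Z with false.
  replace (Z.of_nat x =? Z.of_nat (x+1) - 1)%Z with true. reflexivity.
  symmetry; apply Z.eqb_eq; lia. symmetry; apply Z.eqb_neq; lia. Qed.
Lemma q_dn theta x : (1 <= x)%nat -> q_prop theta (Z.of_nat x) (Z.of_nat (x - 1)) = 1 - theta.
Proof. intros. unfold q_prop. replace (Z.of_nat (x-1) =? Z.of_nat x + 1)%Z with false.
  replace (Z.of_nat (x-1) =? Z.of_nat x - 1)%Z with true. reflexivity.
  symmetry; apply Z.eqb_eq; lia. symmetry; apply Z.eqb_neq; lia. Qed.
Lemma q_dn' theta x : (1 <= x)%nat -> q_prop theta (Z.of_nat (x - 1)) (Z.of_nat x) = theta.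
Proof. intros. unfold q_prop. replace (Z.of_nat x =? Z.of_nat (x-1) + 1)%Z with true. reflexivity.
  symmetry; apply Z.eqb_eq; lia. Qed.

Lemma Rr_up theta x : 0 < theta < 1 -> (1 <= x)%nat -> Rr theta x (x + 1) = (1 - theta) / (2 * theta).
Proof.
  intros Ht Hx. unfold Rr. rewrite q_up, q_up', !pi_t_nat by lia.
  rewrite pow_add. simpl. field. split. lra. apply pow_nonzero. lra.
Qed.

Lemma Rr_dn theta x : 0 < theta < 1 -> (2 <= x)%nat -> Rr theta x (x - 1) = 2 * theta / (1 - theta).
Proof.
  intros Ht Hx. unfold Rr. rewrite q_dn, q_dn', !pi_t_nat by lia.
  replace x with ((x - 1) + 1)%nat at 2 by lia.
  rewrite pow_add. simpl. field. split. lra. apply pow_nonzero. lra.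
Qed.

Definition aa (N : nat) (s : nat -> R) x := binpmf N (s x) 0.

Lemma F4 N s x : (1 <= N)%nat -> (1 <= x)%nat -> 0 <= s x <= 1 -> EW N x (s x) = 1 ->
  (1 - aa N s x) * ((INR x - 1) / INR N) <= 1.
Proof.
  intros HN Hx Hs HE. unfold EW in HE. unfold aa.
  apply Rle_trans with (sum_f_R0 (fun k => binpmf N (s x) k * wval N x k) N); [| rewrite HE; lra].
  set (c := (INR x - 1) / INR N).
  assert (Hc : 0 <= c). { unfold c. apply Rdiv_le_0_compat. pose proof (INR_ge1 x Hx); lra.
    pose proof (INR_ge1 N HN); lra. }
  replace ((1 - binpmf N (s x) 0) * c) with (c * sum_f_R0 (binpmf N (s x)) N + (-c) * binpmf N (s x) 0)
    by (rewrite binpmf_sum; ring).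
  rewrite <- (sum_affine_ind (binpmf N (s x)) N c (-c)). apply sum_le_w.
  - intros; apply binpmf_nonneg; auto.
  - intros j Hj. destruct (wv_bounds N x j HN Hx Hj) as [[H1 H2] H3]. pose proof (eps_pos x Hx).
    unfold ind0. destruct (Nat.eqb j 0) eqn:E. lra.
    apply Nat.eqb_neq in E. specialize (H3 ltac:(lia)). fold c in H3. lra.
Qed.

Lemma F5 N s x : (1 <= N)%nat -> (1 <= x)%nat -> 0 <= s x <= 1 -> EW N x (s x) = 1 ->
  1 <= aa N s x * eps_w x + (1 - aa N s x) * INR x.
Proof.
  intros HN Hx Hs HE. rewrite <- HE at 1. unfold EW, aa.
  replace (binpmf N (s x) 0 * eps_w x + (1 - binpmf N (s x) 0) * INR x) with
    (INR x * sum_f_R0 (binpmf N (s x)) N + (eps_w x - INR x) * binpmf N (s x) 0)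
    by (rewrite binpmf_sum; ring).
  rewrite <- (sum_affine_ind (binpmf N (s x)) N (INR x) (eps_w x - INR x)). apply sum_le_w.
  - intros; apply binpmf_nonneg; auto.
  - intros j Hj. destruct (wv_bounds N x j HN Hx Hj) as [[H1 H2] H3].
    unfold ind0. destruct (Nat.eqb j 0) eqn:E.
    + apply Nat.eqb_eq in E; subst j. rewrite wv0. lra.
    + lra.
Qed.

Definition Acc N (s : nat -> R) Rt x y :=
  E2 (binpmf N (s x)) (binpmf N (s y)) N (Fm Rt (wval N x) (wval N y)).

Ltac acc_setup s N x y :=
  let Hu := fresh in let Hv := fresh in
  assert (Hu : forall j, (j <= N)%nat -> 0 <= binpmf N (s x) j) by (intros; apply binpmf_nonneg; auto);
  assert (Hv : forall j, (j <= N)%nat -> 0 <= binpmf N (s y) j) by (intros; apply binpmf_nonneg; auto).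

Lemma Acc_01 N s Rt x y : (1 <= N)%nat -> (1 <= x)%nat -> (1 <= y)%nat -> 0 < Rt ->
  0 <= s x <= 1 -> 0 <= s y <= 1 -> 0 <= Acc N s Rt x y <= 1.
Proof.
  intros HN Hx Hy HR Hsx Hsy. acc_setup s N x y. unfold Acc. split.
  - apply E2_A0; auto.
    + intros j Hj. destruct (wv_bounds N x j HN Hx Hj) as [[H1 _] _]. pose proof (eps_pos x Hx). lra.
    + intros j Hj. destruct (wv_bounds N y j HN Hy Hj) as [[H1 _] _]. pose proof (eps_pos y Hy). lra.
  - apply E2_A1; auto; apply binpmf_sum.
Qed.

Lemma Acc_U N s Rt x y : (1 <= N)%nat -> (1 <= x)%nat -> (1 <= y)%nat -> 0 < Rt ->
  0 <= s x <= 1 -> 0 <= s y <= 1 ->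
  Acc N s Rt x y <= (1 + Rt * eps_w y / eps_w x) - aa N s x * aa N s y.
Proof.
  intros HN Hx Hy HR Hsx Hsy. acc_setup s N x y. unfold Acc, aa.
  apply E2_AU; auto; try apply binpmf_sum; try apply eps_pos; auto; apply wv0.
Qed.

Lemma Acc_L0 N s Rt x y : (1 <= N)%nat -> (1 <= x)%nat -> (1 <= y)%nat -> 0 < Rt ->
  0 <= s x <= 1 -> 0 <= s y <= 1 ->
  Rmin 1 (Rt * eps_w y / INR x) <= Acc N s Rt x y.
Proof.
  intros HN Hx Hy HR Hsx Hsy. acc_setup s N x y. unfold Acc.
  apply E2_AL0; auto; try apply binpmf_sum; try apply eps_pos; auto.
  - intros j Hj. destruct (wv_bounds N x j HN Hx Hj) as [[H1 H2] _]. pose proof (eps_pos x Hx). lra.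
  - intros j Hj. destruct (wv_bounds N y j HN Hy Hj) as [[H1 _] _]. lra.
Qed.

Lemma Acc_L1 N s Rt x y : (1 <= N)%nat -> (1 <= x)%nat -> (1 <= y)%nat -> 0 < Rt ->
  0 <= s x <= 1 -> 0 <= s y <= 1 ->
  aa N s x * Rmin 1 (Rt * eps_w y / eps_w x) <= Acc N s Rt x y.
Proof.
  intros HN Hx Hy HR Hsx Hsy. acc_setup s N x y. unfold Acc, aa.
  apply E2_AL1; auto; try apply binpmf_sum; try apply eps_pos; auto; try apply wv0.
  - intros j Hj. destruct (wv_bounds N x j HN Hx Hj) as [[H1 H2] _]. pose proof (eps_pos x Hx). lra.
  - intros j Hj. destruct (wv_bounds N y j HN Hy Hj) as [[H1 _] _]. lra.
Qed.

Lemma Acc_L2 N s Rt x y : (1 <= N)%nat -> (1 <= x)%nat -> (1 <= y)%nat -> 0 < Rt ->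
  0 <= s x <= 1 -> 0 <= s y <= 1 ->
  aa N s x * ((1 - aa N s y) * Rmin 1 (Rt * ((INR y - 1) / INR N) / eps_w x)) <= Acc N s Rt x y.
Proof.
  intros HN Hx Hy HR Hsx Hsy. acc_setup s N x y. unfold Acc, aa.
  apply (E2_AL2 _ _ _ _ _ _ _ (eps_w y)); auto; try apply binpmf_sum; try apply eps_pos; auto; try apply wv0.
  - apply Rdiv_le_0_compat. pose proof (INR_ge1 y Hy); lra. pose proof (INR_ge1 N HN); lra.
  - intros j Hj. destruct (wv_bounds N x j HN Hx Hj) as [[H1 H2] _]. pose proof (eps_pos x Hx). lra.
  - intros j Hj. destruct (wv_bounds N y j HN Hy Hj) as [[H1 _] _]. lra.
  - intros j Hj. destruct (wv_bounds N y j HN Hy ltac:(lia)) as [_ H3]. apply H3; lia.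
Qed.

Definition up theta s N x := theta * accept theta s N x (x + 1).
Definition dn theta s N x := if (2 <=? x)%nat then (1 - theta) * accept theta s N x (x - 1) else 0.

Lemma PN_S theta s N x y : (1 <= x)%nat ->
  PN theta s N x y =
  if Nat.eqb y (x + 1) then up theta s N x
  else if Nat.eqb y x then 1 - up theta s N x - dn theta s N x
  else if andb (2 <=? x)%nat (Nat.eqb y (x - 1)) then dn theta s N x
  else 0.
Proof.
  intros Hx. destruct x as [|x']. lia. unfold PN, up, dn. cbv zeta.
  rewrite q_up. destruct (2 <=? S x')%nat eqn:E.
  - rewrite q_dn by lia. reflexivity.
  - reflexivity.
Qed.

Lemma div_le a b c d : 0 < b -> 0 < d -> a * d <= c * b -> a / b <= c / d.
Proof.
  intros Hb Hd H. unfold Rdiv.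
  apply Rmult_le_reg_r with (b * d). nra.
  replace (a * / b * (b * d)) with (a * d) by (field; lra).
  replace (c * / d * (b * d)) with (c * b) by (field; lra). exact H.
Qed.

Lemma R1 x : 2 <= x -> (/ (x - 1) ^ 3) / (/ x ^ 2) <= 8 / x.
Proof.
  intros Hx. replace ((/ (x - 1) ^ 3) / (/ x ^ 2)) with (x ^ 2 / (x - 1) ^ 3) by (field; lra).
  apply div_le. apply pow_lt; lra. lra.
  assert (H : x ^ 3 <= (2 * (x - 1)) ^ 3) by (apply pow_incr; lra).
  replace (x ^ 2 * x) with (x ^ 3) by ring. replace (8 * (x - 1) ^ 3) with ((2 * (x - 1)) ^ 3) by ring. lra.
Qed.

Lemma R2 x : 2 <= x -> (/ (x - 1) ^ 2) / (/ x) <= 4 / x.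
Proof.
  intros Hx. replace ((/ (x - 1) ^ 2) / (/ x)) with (x / (x - 1) ^ 2) by (field; lra).
  apply div_le. apply pow_lt; lra. lra.
  assert (H : x ^ 2 <= (2 * (x - 1)) ^ 2) by (apply pow_incr; lra).
  replace (x * x) with (x ^ 2) by ring. replace (4 * (x - 1) ^ 2) with ((2 * (x - 1)) ^ 2) by ring. lra.
Qed.

Lemma R3 a x n : 2 <= x -> 0 < n -> (1 - a) * ((x - 1) / n) <= 1 -> 1 - a <= 2 * n / x.
Proof.
  intros Hx Hn H. unfold Rdiv in *.
  assert (H2 : (1 - a) * (x - 1) <= n).
  { apply Rmult_le_reg_r with (/ n). apply Rinv_0_lt_compat; lra.
    rewrite Rinv_r by lra. lra. }
  apply Rmult_le_reg_r with x. lra. rewrite Rmult_assoc, Rinv_l by lra. nra.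
Qed.

Lemma R4 a x n : 4 <= x -> 0 < n -> (1 - a) * ((x - 1 - 1) / n) <= 1 -> 1 - a <= 2 * n / x.
Proof.
  intros Hx Hn H. unfold Rdiv in *.
  assert (H2 : (1 - a) * (x - 2) <= n).
  { apply Rmult_le_reg_r with (/ n). apply Rinv_0_lt_compat; lra.
    rewrite Rinv_r by lra. lra. }
  apply Rmult_le_reg_r with x. lra. rewrite Rmult_assoc, Rinv_l by lra. nra.
Qed.

Lemma R5 c x : 1 <= x -> 2 <= c * x -> 1 <= c * (/ (x + 1) ^ 1) / (/ x ^ 2).
Proof.
  intros Hx Hc. replace (c * (/ (x + 1) ^ 1) / (/ x ^ 2)) with (c * x * x / (x + 1)) by (field; lra).
  apply Rmult_le_reg_r with (x + 1). lra. unfold Rdiv. rewrite Rmult_assoc, Rinv_l by lra. nra.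
Qed.

Lemma R6 c x : 1 <= x -> 4 <= c * x -> 1 <= c * (/ (x + 1) ^ 2) / (/ x ^ 3).
Proof.
  intros Hx Hc. replace (c * (/ (x + 1) ^ 2) / (/ x ^ 3)) with (c * x * (x * x) / ((x + 1) * (x + 1))) by (field; lra).
  apply Rmult_le_reg_r with ((x + 1) * (x + 1)). nra. unfold Rdiv. rewrite Rmult_assoc, Rinv_l by nra.
  assert (c * x * (x * x) >= 4 * (x * x)) by nra. nra.
Qed.

Lemma R7 c x n : 1 <= x -> 0 < n -> n <= x -> 1 <= c * x -> 1 <= c * ((x + 1 - 1) / n) / (/ x ^ 1).
Proof.
  intros Hx Hn Hnx Hc. replace (c * ((x + 1 - 1) / n) / (/ x ^ 1)) with (c * x * x / n) by (field; lra).
  apply Rmult_le_reg_r with n. lra. unfold Rdiv. rewrite Rmult_assoc, Rinv_l by lra. nra.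
Qed.

Lemma R8 a x : 1 <= x -> a <= 1 -> 1 <= a * (/ (x + 1) ^ 3) + (1 - a) * (x + 1) -> 1 / (4 * x) <= 1 - a.
Proof.
  intros Hx Ha H.
  assert (He : / (x + 1) ^ 3 <= 1 / 2).
  { rewrite <- (Rmult_1_l (/ _)). apply div_le. apply pow_lt; lra. lra. simpl. nra. }
  assert (Hpos : 0 < / (x + 1) ^ 3) by (apply Rinv_0_lt_compat, pow_lt; lra).
  assert (H2 : 1 / 2 <= (1 - a) * (x + 1)).
  { destruct (Rle_dec 0 a). nra. nra. }
  replace (1 - a) with ((1 - a) / 1) by field. apply div_le. lra. lra. nra.
Qed.

Lemma eps_r0 i : (i mod 3 = 0)%nat -> eps_w i = / INR i ^ 3.
Proof. intros H. unfold eps_w. rewrite H. reflexivity. Qed.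
Lemma eps_r1 i : (i mod 3 = 1)%nat -> eps_w i = / INR i ^ 2.
Proof. intros H. unfold eps_w. rewrite H. reflexivity. Qed.
Lemma eps_r2 i : (i mod 3 = 2)%nat -> eps_w i = / INR i ^ 1.
Proof. intros H. unfold eps_w. rewrite H. reflexivity. Qed.

Lemma res_next i r : (i mod 3 = r)%nat -> (r < 2)%nat -> ((i + 1) mod 3 = r + 1)%nat.
Proof. intros H Hr. pose proof (Nat.div_mod i 3 ltac:(lia)) as H0; rewrite H in H0.
  symmetry; apply Nat.mod_unique with (i / 3)%nat; lia. Qed.
Lemma res_next2 i : (i mod 3 = 2)%nat -> ((i + 1) mod 3 = 0)%nat.
Proof. intros H. pose proof (Nat.div_mod i 3 ltac:(lia)) as H0; rewrite H in H0.
  symmetry; apply Nat.mod_unique with (i / 3 + 1)%nat; lia. Qed.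
Lemma res_prev i r : (i mod 3 = r)%nat -> (1 <= r)%nat -> ((i - 1) mod 3 = r - 1)%nat.
Proof. intros H Hr. assert (Hr3 : (r < 3)%nat) by (rewrite <- H; apply Nat.mod_upper_bound; lia).
  pose proof (Nat.div_mod i 3 ltac:(lia)) as H0; rewrite H in H0.
  symmetry; apply Nat.mod_unique with (i / 3)%nat; lia. Qed.
Lemma res_prev0 i : (i mod 3 = 0)%nat -> (1 <= i)%nat -> ((i - 1) mod 3 = 2)%nat.
Proof. intros H Hi. pose proof (Nat.div_mod i 3 ltac:(lia)) as H0; rewrite H in H0.
  symmetry; apply Nat.mod_unique with (i / 3 - 1)%nat; lia. Qed.
Lemma res_cases i : (i mod 3 = 0 \/ i mod 3 = 1 \/ i mod 3 = 2)%nat.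
Proof. pose proof (Nat.mod_upper_bound i 3 ltac:(lia)). lia. Qed.

Lemma aa_bounds N s x : 0 <= s x <= 1 -> 0 <= aa N s x <= 1.
Proof.
  intros Hs. unfold aa. split. apply binpmf_nonneg; auto.
  rewrite <- (binpmf_sum N (s x)). apply (sum_single (binpmf N (s x))). lia.
  intros; apply binpmf_nonneg; auto.
Qed.

Lemma INR_p1 i : INR (i + 1) = INR i + 1.
Proof. rewrite plus_INR. reflexivity. Qed.
Lemma INR_m1 i : (1 <= i)%nat -> INR (i - 1) = INR i - 1.
Proof. intros. rewrite minus_INR by auto. reflexivity. Qed.

Lemma ratio_bound theta s N :
  0 < theta < 1 ->
  (forall m : nat, (1 <= m)%nat -> 0 <= s m <= 1) ->
  (forall m N : nat, (1 <= m)%nat -> (1 <= N)%nat -> EW N m (s m) = 1) ->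
  (1 <= N)%nat ->
  exists I0 B, (4 <= I0)%nat /\ 0 <= B /\ forall i, (I0 <= i)%nat ->
    0 < up theta s N i /\
    dn theta s N i <= B * up theta s N i /\
    ((i mod 3 = 1)%nat -> dn theta s N i <= B / INR i * up theta s N i).
Proof.
  intros Ht Hs HE HN.
  set (c := (1 - theta) / (2 * theta)).
  set (ci := 2 * theta / (1 - theta)).
  assert (Hc : 0 < c) by (unfold c; apply Rdiv_lt_0_compat; lra).
  assert (Hci : 0 < ci) by (unfold ci; apply Rdiv_lt_0_compat; lra).
  destruct (INR_unbounded (4 / c)) as [K HK].
  set (n := INR N). assert (Hn : 1 <= n) by (apply INR_ge1; auto).
  exists (Nat.max (4 * N + 4) K), (8 * (1 - theta) * (4 * n + 8 * ci + 1) / theta).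
  split. lia. split.
  { apply Rdiv_le_0_compat. apply Rmult_le_pos. lra. lra. lra. }
  intros i Hi.
  set (x := INR i).
  assert (Hx4 : 4 * n + 4 <= x).
  { unfold x, n. replace 4 with (INR 4) by (simpl; ring).
    rewrite <- mult_INR, <- plus_INR. apply le_INR. lia. }
  assert (HxK : 4 <= c * x).
  { assert (INR K <= x) by (apply le_INR; lia).
    assert (4 / c * c = 4) by (field; lra). nra. }
  assert (Hi1 : (1 <= i)%nat) by lia.
  assert (Hsi : 0 <= s i <= 1) by (apply Hs; lia).
  assert (Hsm : 0 <= s (i - 1)%nat <= 1) by (apply Hs; lia).
  assert (Hsp : 0 <= s (i + 1)%nat <= 1) by (apply Hs; lia).
  pose proof (aa_bounds N s i Hsi) as Ha.
  pose proof (aa_bounds N s (i-1) Hsm) as Ham.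
  pose proof (aa_bounds N s (i+1) Hsp) as Hap.
  assert (H1a : 1 - aa N s i <= 2 * n / x).
  { apply R3. lra. lra. apply F4; auto. }
  assert (H1am : 1 - aa N s (i - 1) <= 2 * n / x).
  { assert (Hi2 : (1 <= i - 1)%nat) by lia.
    apply R4. lra. lra. pose proof (F4 N s (i - 1) HN Hi2 Hsm (HE _ _ Hi2 HN)) as H.
    rewrite INR_m1 in H by lia. exact H. }
  assert (Hnx : 2 * n / x <= 1 / 2).
  { apply div_le; lra. }
  assert (Hxp : 0 < x) by lra.
  assert (Hup : up theta s N i = theta * Acc N s c i (i + 1)).
  { unfold up. rewrite accept_E2, Rr_up by (auto; lia). reflexivity. }
  assert (Hdn : dn theta s N i = (1 - theta) * Acc N s ci i (i - 1)).
  { unfold dn. replace (2 <=? i)%nat with true by (symmetry; apply Nat.leb_le; lia).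
    rewrite accept_E2, Rr_dn by (auto; lia). reflexivity. }
  pose proof (Acc_01 N s ci i (i-1) HN Hi1 ltac:(lia) Hci Hsi Hsm) as Hd01.
  pose proof (Acc_U N s ci i (i-1) HN Hi1 ltac:(lia) Hci Hsi Hsm) as HdU.
  assert (Hprod : 1 - aa N s i * aa N s (i - 1) <= 4 * n / x).
  { assert (2 * n / x + 2 * n / x = 4 * n / x) by (field; lra). nra. }
  assert (HB : 0 <= 8 * (1 - theta) * (4 * n + 8 * ci + 1) / theta).
  { apply Rdiv_le_0_compat. apply Rmult_le_pos. lra. lra. lra. }
  set (B := 8 * (1 - theta) * (4 * n + 8 * ci + 1) / theta) in *.
  assert (HBt : B * theta = 8 * (1 - theta) * (4 * n + 8 * ci + 1)) by (unfold B; field; lra).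
  assert (Hix : 0 < / x) by (apply Rinv_0_lt_compat; lra).
  assert (Hxix : x * / x = 1) by (apply Rinv_r; lra).
  assert (Hai : 1 / 2 <= aa N s i) by lra.
  destruct (res_cases i) as [Hr | [Hr | Hr]].
  -
    pose proof (Acc_L1 N s c i (i+1) HN Hi1 ltac:(lia) Hc Hsi Hsp) as HL.
    rewrite (eps_r0 i Hr), (eps_r1 (i+1) ltac:(rewrite (res_next i 0); auto)), INR_p1 in HL.
    fold x in HL. rewrite Rmin_left in HL by (apply R6; lra).
    assert (Hu : theta / 2 <= up theta s N i) by (rewrite Hup; nra).
    split. lra. split.
    + rewrite Hdn. apply Rle_trans with (1 - theta). nra.
      apply Rle_trans with (B * (theta / 2)). 2: apply Rmult_le_compat_l; lra.
      replace (B * (theta / 2)) with (B * theta / 2) by field. rewrite HBt.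
      assert (0 <= ci) by lra. nra.
    + intros H; lia.
  -
    pose proof (Acc_L1 N s c i (i+1) HN Hi1 ltac:(lia) Hc Hsi Hsp) as HL.
    rewrite (eps_r1 i Hr), (eps_r2 (i+1) ltac:(rewrite (res_next i 1); auto)), INR_p1 in HL.
    fold x in HL. rewrite Rmin_left in HL by (apply R5; lra).
    assert (Hu : theta / 2 <= up theta s N i) by (rewrite Hup; nra).
    rewrite (eps_r1 i Hr), (eps_r0 (i-1) ltac:(rewrite (res_prev i 1); auto)), INR_m1 in HdU by lia.
    fold x in HdU.
    assert (HR1 : ci * / (x - 1) ^ 3 / / x ^ 2 <= ci * (8 / x)).
    { unfold Rdiv at 1. rewrite Rmult_assoc. apply Rmult_le_compat_l. lra. apply R1. lra. }
    assert (HAd : Acc N s ci i (i - 1) <= (4 * n + 8 * ci) * / x).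
    { assert (4 * n / x = 4 * n * / x) by reflexivity.
      assert (ci * (8 / x) = 8 * ci * / x) by (unfold Rdiv; ring). nra. }
    split. lra. split.
    + rewrite Hdn. apply Rle_trans with (1 - theta). nra.
      apply Rle_trans with (B * (theta / 2)). 2: apply Rmult_le_compat_l; lra.
      replace (B * (theta / 2)) with (B * theta / 2) by field. rewrite HBt.
      assert (0 <= ci) by lra. nra.
    + intros _. rewrite Hdn.
      apply Rle_trans with ((1 - theta) * ((4 * n + 8 * ci) * / x)).
      { apply Rmult_le_compat_l; lra. }
      apply Rle_trans with (B / x * (theta / 2)).
      2: { apply Rmult_le_compat_l. apply Rdiv_le_0_compat; lra. lra. }
      replace (B / x * (theta / 2)) with (B * theta / 2 * / x) by (field; lra). rewrite HBt.
      rewrite <- Rmult_assoc. apply Rmult_le_compat_r. lra. assert (0 <= ci) by lra. nra.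
  -
    pose proof (Acc_L2 N s c i (i+1) HN Hi1 ltac:(lia) Hc Hsi Hsp) as HL.
    rewrite (eps_r2 i Hr), INR_p1 in HL. fold x n in HL.
    rewrite Rmin_left in HL by (apply R7; lra).
    assert (Hip : (1 <= i + 1)%nat) by lia.
    pose proof (F5 N s (i+1) HN Hip Hsp (HE _ _ Hip HN)) as H5.
    rewrite (eps_r0 (i+1) ltac:(apply res_next2; auto)), INR_p1 in H5. fold x in H5.
    apply R8 in H5; [|lra|lra].
    assert (Hu : theta * (1 / 2 * (1 / (4 * x))) <= up theta s N i).
    { rewrite Hup. apply Rmult_le_compat_l. lra. eapply Rle_trans. 2: exact HL.
      rewrite Rmult_1_r. apply Rmult_le_compat; try lra. unfold Rdiv; rewrite Rmult_1_l.
      left; apply Rinv_0_lt_compat; lra. }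
    rewrite (eps_r2 i Hr), (eps_r1 (i-1) ltac:(rewrite (res_prev i 2); auto)), INR_m1 in HdU by lia.
    fold x in HdU. rewrite pow_1 in HdU.
    assert (HR1 : ci * / (x - 1) ^ 2 / / x <= ci * (4 / x)).
    { unfold Rdiv at 1. rewrite Rmult_assoc. apply Rmult_le_compat_l. lra. apply R2. lra. }
    assert (HAd : Acc N s ci i (i - 1) <= (4 * n + 4 * ci) * / x).
    { assert (4 * n / x = 4 * n * / x) by reflexivity.
      assert (ci * (4 / x) = 4 * ci * / x) by (unfold Rdiv; ring). nra. }
    split. { assert (0 < theta * (1 / 2 * (1 / (4 * x)))).
      { apply Rmult_lt_0_compat. lra. apply Rmult_lt_0_compat. lra. apply Rdiv_lt_0_compat; lra. }
      lra. } split.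
    + rewrite Hdn.
      apply Rle_trans with ((1 - theta) * ((4 * n + 4 * ci) * / x)).
      { apply Rmult_le_compat_l; lra. }
      apply Rle_trans with (B * (theta * (1 / 2 * (1 / (4 * x))))).
      2: { apply Rmult_le_compat_l; lra. }
      replace (B * (theta * (1 / 2 * (1 / (4 * x))))) with (B * theta / 8 * / x) by (field; lra).
      rewrite HBt. rewrite <- Rmult_assoc. apply Rmult_le_compat_r. lra. assert (0 <= ci) by lra. nra.
    + intros H; lia.
Qed.

Lemma up_bounds theta s N x : 0 < theta < 1 ->
  (forall m : nat, (1 <= m)%nat -> 0 <= s m <= 1) -> (1 <= N)%nat -> (1 <= x)%nat ->
  0 < up theta s N x <= theta.
Proof.
  intros Ht Hs HN Hx.
  set (c := (1 - theta) / (2 * theta)).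
  assert (Hc : 0 < c) by (unfold c; apply Rdiv_lt_0_compat; lra).
  assert (E : up theta s N x = theta * Acc N s c x (x + 1)).
  { unfold up. rewrite accept_E2, Rr_up by (auto; lia). reflexivity. }
  pose proof (Acc_01 N s c x (x+1) HN Hx ltac:(lia) Hc (Hs x Hx) (Hs (x+1)%nat ltac:(lia))).
  pose proof (Acc_L0 N s c x (x+1) HN Hx ltac:(lia) Hc (Hs x Hx) (Hs (x+1)%nat ltac:(lia))).
  assert (0 < Rmin 1 (c * eps_w (x + 1) / INR x)).
  { apply Rmin_glb_lt. lra. apply Rdiv_lt_0_compat. apply Rmult_lt_0_compat. auto.
    apply eps_pos; lia. pose proof (INR_ge1 x Hx); lra. }
  rewrite E. split. apply Rmult_lt_0_compat; lra. nra.
Qed.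

Lemma dn_bounds theta s N x : 0 < theta < 1 ->
  (forall m : nat, (1 <= m)%nat -> 0 <= s m <= 1) -> (1 <= N)%nat ->
  0 <= dn theta s N x <= 1 - theta.
Proof.
  intros Ht Hs HN. unfold dn. destruct (2 <=? x)%nat eqn:E; [|lra].
  apply Nat.leb_le in E.
  set (ci := 2 * theta / (1 - theta)).
  assert (Hci : 0 < ci) by (unfold ci; apply Rdiv_lt_0_compat; lra).
  rewrite accept_E2, Rr_dn by (auto; lia). fold ci.
  pose proof (Acc_01 N s ci x (x-1) HN ltac:(lia) ltac:(lia) Hci (Hs x ltac:(lia)) (Hs (x-1)%nat ltac:(lia))).
  unfold Acc in H. nra.
Qed.

Lemma PN_nonneg theta s N y z : 0 < theta < 1 ->
  (forall m : nat, (1 <= m)%nat -> 0 <= s m <= 1) -> (1 <= N)%nat ->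
  0 <= PN theta s N y z.
Proof.
  intros Ht Hs HN. destruct y as [|y'].
  - simpl. destruct (Nat.eqb z 0); lra.
  - rewrite PN_S by lia.
    pose proof (up_bounds theta s N (S y') Ht Hs HN ltac:(lia)).
    pose proof (dn_bounds theta s N (S y') Ht Hs HN).
    destruct (Nat.eqb z (S y' + 1)). lra. destruct (Nat.eqb z (S y')). lra.
    destruct (andb _ _). lra. lra.
Qed.

Lemma PN_band1 theta s N y z : (y + 1 < z)%nat -> PN theta s N y z = 0.
Proof.
  intros H. destruct y as [|y'].
  - simpl. replace (Nat.eqb z 0) with false. reflexivity. symmetry; apply Nat.eqb_neq; lia.
  - rewrite PN_S by lia.
    replace (Nat.eqb z (S y' + 1)) with false by (symmetry; apply Nat.eqb_neq; lia).
    replace (Nat.eqb z (S y')) with false by (symmetry; apply Nat.eqb_neq; lia).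
    replace (Nat.eqb z (S y' - 1)) with false by (symmetry; apply Nat.eqb_neq; lia).
    rewrite Bool.andb_false_r. reflexivity.
Qed.

Lemma PN_band2 theta s N y z : (z + 1 < y)%nat -> PN theta s N y z = 0.
Proof.
  intros H. destruct y as [|y']. lia.
  rewrite PN_S by lia.
  replace (Nat.eqb z (S y' + 1)) with false by (symmetry; apply Nat.eqb_neq; lia).
  replace (Nat.eqb z (S y')) with false by (symmetry; apply Nat.eqb_neq; lia).
  replace (Nat.eqb z (S y' - 1)) with false by (symmetry; apply Nat.eqb_neq; lia).
  rewrite Bool.andb_false_r. reflexivity.
Qed.

Lemma sum_last_only (f : nat -> R) n : (forall k, (k < n)%nat -> f k = 0) -> sum_f_R0 f n = f n.
Proof.
  intros H. destruct n. reflexivity. rewrite tech5.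
  rewrite sum_eq_R0. ring. intros k Hk. apply H. lia.
Qed.

Lemma PV_formula theta s N (V : nat -> R) y : (1 <= y)%nat ->
  sum_f_R0 (fun z => PN theta s N y z * V z) (S y) =
  dn theta s N y * V (y - 1)%nat + (1 - up theta s N y - dn theta s N y) * V y
  + up theta s N y * V (y + 1)%nat.
Proof.
  intros Hy. destruct y as [|y']. lia.
  rewrite tech5, tech5.
  rewrite sum_last_only by (intros k Hk; rewrite PN_band2 by lia; ring).
  rewrite !PN_S by lia.
  replace (Nat.eqb y' (S y' + 1)) with false by (symmetry; apply Nat.eqb_neq; lia).
  replace (Nat.eqb y' (S y')) with false by (symmetry; apply Nat.eqb_neq; lia).
  replace (Nat.eqb y' (S y' - 1)) with true by (symmetry; apply Nat.eqb_eq; lia).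
  replace (Nat.eqb (S y') (S y' + 1)) with false by (symmetry; apply Nat.eqb_neq; lia).
  rewrite Nat.eqb_refl.
  replace (Nat.eqb (S (S y')) (S y' + 1)) with true by (symmetry; apply Nat.eqb_eq; lia).
  replace (S y' - 1)%nat with y' by lia. replace (S y' + 1)%nat with (S (S y')) by lia.
  rewrite Bool.andb_true_r.
  destruct (2 <=? S y')%nat eqn:E.
  - ring.
  - unfold dn. rewrite E. ring.
Qed.

Fixpoint dd theta s N m (j : nat) : R :=
  match j with
  | O => 1
  | S j' => if (S j' <=? m)%nat then 1
            else dd theta s N m j' * (dn theta s N (S j') / up theta s N (S j'))
  end.

Lemma dd_S theta s N m j : dd theta s N m (S j) =
  if (S j <=? m)%nat then 1
  else dd theta s N m j * (dn theta s N (S j) / up theta s N (S j)).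
Proof. reflexivity. Qed.

Lemma dd_low theta s N m j : (j <= m)%nat -> dd theta s N m j = 1.
Proof. intros H. destruct j. reflexivity. rewrite dd_S. replace (S j <=? m)%nat with true. reflexivity.
  symmetry; apply Nat.leb_le; lia. Qed.

Lemma dd_high theta s N m j : (m < S j)%nat ->
  dd theta s N m (S j) = dd theta s N m j * (dn theta s N (S j) / up theta s N (S j)).
Proof. intros H. rewrite dd_S. replace (S j <=? m)%nat with false. reflexivity.
  symmetry; apply Nat.leb_gt; lia. Qed.

Lemma dd_nonneg theta s N m j : 0 < theta < 1 ->
  (forall m : nat, (1 <= m)%nat -> 0 <= s m <= 1) -> (1 <= N)%nat ->
  0 <= dd theta s N m j.
Proof.
  intros Ht Hs HN. induction j. simpl; lra. rewrite dd_S. destruct (S j <=? m)%nat. lra.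
  pose proof (up_bounds theta s N (S j) Ht Hs HN ltac:(lia)).
  pose proof (dn_bounds theta s N (S j) Ht Hs HN).
  apply Rmult_le_pos. auto. apply Rdiv_le_0_compat; lra.
Qed.

Lemma mod_hit j : exists k, (1 <= k <= 3)%nat /\ ((j + k) mod 3 = 1)%nat.
Proof.
  pose proof (Nat.div_mod j 3 ltac:(lia)) as H0.
  destruct (res_cases j) as [H | [H | H]]; rewrite H in H0.
  - exists 1%nat. split. lia. symmetry; apply Nat.mod_unique with (j / 3)%nat; lia.
  - exists 3%nat. split. lia. symmetry; apply Nat.mod_unique with (j / 3 + 1)%nat; lia.
  - exists 2%nat. split. lia. symmetry; apply Nat.mod_unique with (j / 3 + 1)%nat; lia.
Qed.

Lemma prod3 r1 r2 r3 B b : 0 <= r1 <= B -> 0 <= r2 <= B -> 0 <= r3 <= B -> 0 <= b ->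
  (r1 <= b \/ r2 <= b \/ r3 <= b) -> B * B * b <= 1 / 8 -> r1 * r2 * r3 <= 1 / 8.
Proof.
  intros H1 H2 H3 Hb Hor HB.
  destruct Hor as [H | [H | H]].
  - apply Rle_trans with (b * B * B). repeat apply Rmult_le_compat; try lra.
    apply Rmult_le_pos; lra. nra.
  - apply Rle_trans with (B * b * B). repeat apply Rmult_le_compat; try lra.
    apply Rmult_le_pos; lra. nra.
  - apply Rle_trans with (B * B * b). repeat apply Rmult_le_compat; try lra.
    apply Rmult_le_pos; lra. lra.
Qed.

Lemma dd_summable theta s N m :
  0 < theta < 1 ->
  (forall m : nat, (1 <= m)%nat -> 0 <= s m <= 1) ->
  (forall m N : nat, (1 <= m)%nat -> (1 <= N)%nat -> EW N m (s m) = 1) ->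
  (1 <= N)%nat -> ex_series (dd theta s N m).
Proof.
  intros Ht Hs HE HN.
  destruct (ratio_bound theta s N Ht Hs HE HN) as [I0 [B [HI0 [HB Hrat]]]].
  destruct (INR_unbounded (8 * (B * B * B))) as [K2 HK2].
  set (J := Nat.max (Nat.max I0 (m + 1)) K2).
  set (d := dd theta s N m).
  set (r := fun i => dn theta s N i / up theta s N i).
  assert (Hr : forall i, (I0 <= i)%nat -> 0 <= r i <= B /\
             ((i mod 3 = 1)%nat -> r i <= B / INR i)).
  { intros i Hi. destruct (Hrat i Hi) as [Hu [H1 H2]].
    pose proof (dn_bounds theta s N i Ht Hs HN). unfold r.
    split. split. apply Rdiv_le_0_compat; lra.
    apply Rmult_le_reg_r with (up theta s N i). auto. unfold Rdiv.
    rewrite Rmult_assoc, Rinv_l by lra. lra.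
    intros Hm. apply Rmult_le_reg_r with (up theta s N i). auto. unfold Rdiv.
    rewrite Rmult_assoc, Rinv_l by lra. specialize (H2 Hm). unfold Rdiv in H2. lra. }
  assert (Hd : forall i, (J < i)%nat -> d i = d (i - 1)%nat * r i).
  { intros i Hi. destruct i. lia. unfold d. rewrite dd_high by lia.
    replace (S i - 1)%nat with i by lia. reflexivity. }
  assert (Hdpos : forall i, 0 <= d i) by (intro; apply dd_nonneg; auto).
  assert (Hstep : forall j, (J <= j)%nat -> d (j + 3)%nat <= d j / 8).
  { intros j Hj.
    rewrite (Hd (j+3)%nat), (Hd (j + 3 - 1)%nat), (Hd (j + 3 - 1 - 1)%nat) by lia.
    replace (j + 3 - 1 - 1 - 1)%nat with j by lia.
    replace (j + 3 - 1 - 1)%nat with (j + 1)%nat by lia.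
    replace (j + 3 - 1)%nat with (j + 2)%nat by lia.
    assert (Hj1 : 0 < INR (j + 1)) by (apply lt_0_INR; lia).
    assert (HK : INR K2 <= INR (j + 1)) by (apply le_INR; unfold J in Hj; lia).
    assert (Hprod : r (j + 1)%nat * r (j + 2)%nat * r (j + 3)%nat <= 1 / 8).
    { apply prod3 with B (B / INR (j + 1)).
      - apply Hr; unfold J in Hj; lia.
      - apply Hr; unfold J in Hj; lia.
      - apply Hr; unfold J in Hj; lia.
      - apply Rdiv_le_0_compat; lra.
      - destruct (mod_hit j) as [k [Hk Hmod]].
        assert (Hle : forall i, (j + 1 <= i)%nat -> B / INR i <= B / INR (j + 1)).
        { intros i Hi. unfold Rdiv. apply Rmult_le_compat_l. lra.
          apply Rinv_le_contravar. lra. apply le_INR. lia. }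
        destruct (Nat.eq_dec k 1) as [->|]; [left|].
        { eapply Rle_trans. apply (proj2 (Hr (j+1)%nat ltac:(unfold J in Hj; lia))). auto. apply Hle; lia. }
        destruct (Nat.eq_dec k 2) as [->|]; [right; left|right; right].
        { eapply Rle_trans. apply (proj2 (Hr (j+2)%nat ltac:(unfold J in Hj; lia))). auto. apply Hle; lia. }
        replace k with 3%nat in Hmod by lia.
        eapply Rle_trans. apply (proj2 (Hr (j+3)%nat ltac:(unfold J in Hj; lia))). auto. apply Hle; lia.
      - apply Rmult_le_reg_r with (INR (j + 1)). auto. unfold Rdiv.
        replace (B * B * (B * / INR (j + 1)) * INR (j + 1)) with (B * B * B) by (field; lra). lra. }
    pose proof (Hdpos j).
    replace (d j * r (j + 1)%nat * r (j + 2)%nat * r (j + 3)%nat) with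
      (d j * (r (j + 1)%nat * r (j + 2)%nat * r (j + 3)%nat)) by ring.
    apply Rle_trans with (d j * (1/8)). apply Rmult_le_compat_l; auto. lra. }
  set (M := d J + 2 * d (J + 1)%nat + 4 * d (J + 2)%nat).
  assert (Hgeo : forall k, d (J + k)%nat <= M * (1/2)^k /\ d (J + k + 1)%nat <= M * (1/2)^(k+1)
                            /\ d (J + k + 2)%nat <= M * (1/2)^(k+2)).
  { induction k.
    - pose proof (Hdpos J). pose proof (Hdpos (J+1)%nat). pose proof (Hdpos (J+2)%nat).
      replace (J + 0)%nat with J by lia. replace (J + 0 + 1)%nat with (J+1)%nat by lia.
      replace (J + 0 + 2)%nat with (J+2)%nat by lia. unfold M. simpl. lra.
    - destruct IHk as [H0 [H1 H2]].
      replace (J + S k)%nat with (J + k + 1)%nat by lia.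
      replace (J + k + 1 + 1)%nat with (J + k + 2)%nat by lia.
      replace (J + k + 1 + 2)%nat with (J + k + 3)%nat by lia.
      replace (S k + 1)%nat with (k + 2)%nat by lia.
      replace (S k + 2)%nat with (k + 3)%nat by lia.
      replace (S k) with (k + 1)%nat by lia.
      split. exact H1. split. exact H2.
      pose proof (Hstep (J + k)%nat ltac:(lia)). replace (J + k + 3)%nat with (J + k + 3)%nat by lia.
      rewrite pow_add in *. simpl in *. lra. }
  apply (ex_series_incr_n _ J).
  apply (@ex_series_le R_AbsRing R_CompleteNormedModule _ (fun k => M * (1/2)^k)).
  - intros k. rewrite Rabs_pos_eq by apply Hdpos. apply Hgeo.
  - apply (ex_series_scal_l M (fun k => (1/2)^k)). apply ex_series_geom. rewrite Rabs_pos_eq; lra.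
Qed.

Definition VV theta s N m (y : nat) : R := Series (fun k => dd theta s N m (Nat.max y m + k)).

Theorem proposition3p14 (theta : R) (s : nat -> R) :
  0 < theta < 1 ->
  (forall m : nat, (1 <= m)%nat -> 0 <= s m <= 1) ->
  (forall m N : nat, (1 <= m)%nat -> (1 <= N)%nat -> EW N m (s m) = 1) ->
  forall N : nat, (1 <= N)%nat -> transient_chain (PN theta s N).
Proof.
  intros Ht Hs HE N HN m Hm.
  pose proof (dd_summable theta s N m Ht Hs HE HN) as Hsum.
  set (d := dd theta s N m) in *.
  set (V := VV theta s N m).
  assert (Hshift : forall p, ex_series (fun k => d (p + k)%nat)).
  { intro p. apply (ex_series_incr_n d p). exact Hsum. }
  assert (Hdpos : forall i, 0 <= d i) by (intro; apply dd_nonneg; auto).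
  assert (Vlow : forall y, (y <= m)%nat -> V y = V m).
  { intros y Hy. unfold V, VV. rewrite Nat.max_r by lia. rewrite Nat.max_id. reflexivity. }
  assert (Vstep : forall y, (m <= y)%nat -> V y = d y + V (S y)).
  { intros y Hy. unfold V, VV. rewrite !Nat.max_l by lia.
    rewrite Series_incr_1 by apply Hshift. rewrite Nat.add_0_r. f_equal.
    apply Series_ext. intros k. f_equal. lia. }
  assert (Vpos : forall y, 0 <= V y).
  { intro y. unfold V, VV.
    assert (H0 : Series (fun _ => 0) = 0) by (rewrite (Series_finite _ 0); reflexivity).
    rewrite <- H0. apply Series_le. intros; split. lra. apply Hdpos. apply Hshift. }
  assert (Hsup : forall y, V y - sum_f_R0 (fun z => PN theta s N y z * V z) (S y) =
                           if Nat.eqb y m then up theta s N m else 0).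
  { intros y. destruct y as [|y'].
    - replace (Nat.eqb 0 m) with false by (symmetry; apply Nat.eqb_neq; lia).
      simpl. ring.
    - rewrite PV_formula by lia. set (y := S y') in *.
      replace (y - 1)%nat with y' by (unfold y; lia).
      pose proof (up_bounds theta s N y Ht Hs HN ltac:(unfold y; lia)) as Hu.
      destruct (Compare_dec.lt_eq_lt_dec y m) as [[Hlt | Heq] | Hgt].
      + replace (Nat.eqb y m) with false by (symmetry; apply Nat.eqb_neq; lia).
        rewrite (Vlow y'), (Vlow y), (Vlow (y + 1)%nat) by (unfold y in *; lia). ring.
      + rewrite Heq, Nat.eqb_refl.
        rewrite (Vlow y') by (unfold y in *; lia).
        rewrite (Vstep m) by lia. replace (m + 1)%nat with (S m) by lia.
        unfold d. rewrite dd_low by lia. ring.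
      + replace (Nat.eqb y m) with false by (symmetry; apply Nat.eqb_neq; lia).
        rewrite (Vstep y') by (unfold y in *; lia). fold y.
        rewrite (Vstep y) by lia. replace (y + 1)%nat with (S y) by lia.
        unfold d, y. rewrite dd_high by lia. fold y.
        field. lra. }
  apply green_bound with (V := V) (c := up theta s N m).
  - intros; apply PN_nonneg; auto.
  - intros; apply PN_band1; auto.
  - intros; apply PN_band2; auto.
  - exact Vpos.
  - apply up_bounds; auto.
  - intro y. rewrite Hsup. destruct (Nat.eqb y m). pose proof (up_bounds theta s N m Ht Hs HN Hm). lra. lra.
  - rewrite Hsup, Nat.eqb_refl. lra.
Qed.
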